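(* For integers $1\le k\le n-1$, \[ l_k(n) = \tfrac12\,|\mathrm{Epi}(P_n,P_{n-k+1})|. \]
   Context: For a positive integer $m$, $P_m$ denotes the path with vertex set $[m]=\{1,\dots,m\}$ in which $i$ and $j$ are adjacent iff $|i-j|=1$; $\mathrm{Hom}(P_n,P_r)$ is the set of maps $f:[n]\to[r]$ with $|f(i)-f(i+1)|=1$ for $1\le i\le n-1$, and $\mathrm{Epi}(P_n,P_r)=\{f\in\mathrm{Hom}(P_n,P_r): f([n])=[r]\}$. An endomorphism of $P_n$ is an element of $\mathrm{Hom}(P_n,P_n)$; it induces the partition of $[n]$ whose blocks are its nonempty fibers. Let $\mathscr C(P_n)$ be the set of partitions of $[n]$ induced by endomorphisms of $P_n$, and for $1\le k\le n-1$ let $l_k(n)=|\{\rho\in\mathscr C(P_n): \rho \text{ has exactly } n-k+1 \text{ blocks}\}|$. *)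

(* Defs.v *)
(* Vertex set [m] = {1..m} of P_m is modelled by 'I_m = {0..m-1}
   (shift by one; adjacency |i-j|=1 is shift invariant). *)
From mathcomp Require Import all_boot.
Set Implicit Arguments. Unset Strict Implicit. Unset Printing Implicit Defensive.

Definition is_hom (n r : nat) (f : {ffun 'I_n -> 'I_r}) : bool :=
  [forall i : 'I_n, forall j : 'I_n,
     (val j == (val i).+1) ==>
       (((val (f i)).+1 == val (f j)) || ((val (f j)).+1 == val (f i)))].

Definition Hom (n r : nat) : {set {ffun 'I_n -> 'I_r}} := [set f | is_hom f].

Definition Epi (n r : nat) : {set {ffun 'I_n -> 'I_r}} :=
  [set f in Hom n r | f @: [set: 'I_n] == [set: 'I_r]].

Definition induced_partition (n : nat) (f : {ffun 'I_n -> 'I_n}) : {set {set 'I_n}} :=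
  preim_partition f [set: 'I_n].

Definition CP (n : nat) : {set {set {set 'I_n}}} :=
  [set induced_partition f | f in Hom n n].

Definition l (k n : nat) : nat := #|[set rho in CP n | #|rho| == n - k + 1]|.

(* Main.v *)
Require Import Defs.
From mathcomp Require Import all_boot zify.
Set Implicit Arguments. Unset Strict Implicit. Unset Printing Implicit Defensive.

Definition stepP (F : nat -> nat) (N : nat) :=
  forall i, i.+1 < N -> F i.+1 = F i + 1 \/ F i = F i.+1 + 1.

Lemma step_rel (F G : nat -> nat) N : stepP F N -> stepP G N ->
  (forall i j, i < N -> j < N -> (F i = F j <-> G i = G j)) -> 1 < N ->
  (forall i, i < N -> G i + F 0 = F i + G 0) \/
  (forall i, i < N -> G i + F i = G 0 + F 0).
Proof.
move=> hF hG hFG hN.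
have [hF0 hG0] := (hF 0 hN, hG 0 hN).
have key : forall (Q : nat -> Prop),
    Q 0 -> Q 1 ->
    (forall i, i.+2 < N -> Q i -> Q i.+1 -> Q i.+2) ->
    forall i, i < N -> Q i.
  move=> Q Q0 Q1 QS.
  have: forall i, i.+1 < N -> Q i /\ Q i.+1.
    elim=> [|i IH] hi; first by split.
    have [] := IH (ltnW hi) => q1 q2; split=> //; exact: QS.
  move=> H [|i] hi; first by [].
  by have [] := H i hi.
case: (boolP (G 1 + F 0 == F 1 + G 0)) => /eqP h01.
- left; apply: key; [lia|lia|].
  move=> i hi Q0 Q1.
  have := hF i (ltnW hi); have := hG i (ltnW hi); have := hF i.+1 hi; have := hG i.+1 hi; have := hFG i.+2 i hi (ltnW (ltnW hi)).
  lia.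
- right; apply: key; [lia|lia|].
  move=> i hi Q0 Q1.
  have := hF i (ltnW hi); have := hG i (ltnW hi); have := hF i.+1 hi; have := hG i.+1 hi; have := hFG i.+2 i hi (ltnW (ltnW hi)).
  lia.
Qed.

Lemma ivt (F : nat -> nat) N : stepP F N -> forall d i y, i + d < N ->
  (F i <= y <= F (i + d)) \/ (F (i + d) <= y <= F i) -> exists k, k < N /\ F k = y.
Proof.
move=> hF; elim=> [|d IH] i y hid hy.
  exists i; split; [lia|]; rewrite addn0 in hy; lia.
case: (boolP ((F i <= y <= F (i + d)) || (F (i + d) <= y <= F i))) => [/orP h|h].
  apply: (IH i y) => //; lia.
exists (i + d.+1); split => //.
have := hF (i + d); rewrite -addnS => /(_ hid).
move: h hy; rewrite addnS; lia.
Qed.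
Section S.
Variables (m r : nat).
Local Notation n := m.+1.

Definition nf (f : {ffun 'I_n -> 'I_r}) (i : nat) : nat := val (f (inord i)).

Lemma nfE f (x : 'I_n) : nf f x = val (f x).
Proof. by rewrite /nf inord_val. Qed.

Lemma nf_lt f i : nf f i < r.
Proof. exact: ltn_ord. Qed.

Lemma hom_nf f : is_hom f -> stepP (nf f) n.
Proof.
move=> /forallP hf i hi.
have /forallP := hf (inord i) => /(_ (inord i.+1)) /implyP.
rewrite /= !inordK //; last exact: ltnW.
rewrite /nf; case: (f (inord i)) => a ha; case: (f (inord i.+1)) => b hb /=.
move=> /(_ (eqxx _)) /orP[] /eqP; lia.
Qed.

Lemma is_homP f : stepP (nf f) n -> is_hom f.
Proof.
move=> hf; apply/forallP => i; apply/forallP => j; apply/implyP => /eqP hj.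
move: hj; case: i => i hi0; case: j => j hj0 /= hj; subst j.
have := hf _ hj0.
rewrite (nfE f (Ordinal hi0)) (nfE f (Ordinal hj0)).
case: (f (Ordinal hi0)) => a ha; case: (f (Ordinal hj0)) => b hb /=.
by case=> h; apply/orP; [left|right]; apply/eqP; lia.
Qed.

Lemma EpiP f : f \in Epi n r -> is_hom f /\ forall v : 'I_r, exists x, f x = v.
Proof.
rewrite !inE => /andP[hf /eqP him]; split => // v.
have : v \in f @: [set: 'I_n] by rewrite him inE.
by case/imsetP => x _ ->; exists x.
Qed.

Lemma EpiI f : is_hom f -> (forall v : 'I_r, exists x, f x = v) -> f \in Epi n r.
Proof.
move=> hf hs; rewrite !inE hf /=; apply/eqP/setP => v; rewrite inE.
by have [x <-] := hs v; rewrite imset_f.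
Qed.

Definition sig (g : {ffun 'I_n -> 'I_r}) : {ffun 'I_n -> 'I_r} :=
  [ffun i => rev_ord (g i)].

Lemma sigK : involutive sig.
Proof. by move=> g; apply/ffunP => x; rewrite !ffunE rev_ordK. Qed.

Lemma sig_epi g : g \in Epi n r -> sig g \in Epi n r.
Proof.
case/EpiP => hg hs; apply: EpiI.
  apply: is_homP => i hi.
  have := hom_nf hg hi; rewrite /nf !ffunE.
  case: (g (inord i)) => a ha; case: (g (inord i.+1)) => b hb /=; lia.
move=> v; have [x hx] := hs (rev_ord v); exists x.
by rewrite ffunE hx rev_ordK.
Qed.

Lemma sig_neq g : 1 < r -> g \in Epi n r -> sig g != g.
Proof.
move=> hr /EpiP[_ hs]; have [x hx] := hs (Ordinal (ltnW hr)).
apply/eqP => /(congr1 (fun h : {ffun 'I_n -> 'I_r} => val (h x))).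
by rewrite ffunE hx /=; lia.
Qed.

End S.

Definition Phi n (rT : finType) (f : {ffun 'I_n -> rT}) : {set {set 'I_n}} :=
  preim_partition f [set: 'I_n].

Lemma Phi_eq n (rT1 rT2 : finType) (f : {ffun 'I_n -> rT1}) (g : {ffun 'I_n -> rT2}) :
  (forall x y, (f x == f y) = (g x == g y)) -> Phi f = Phi g.
Proof.
move=> h; rewrite /Phi /preim_partition /equivalence_partition.
apply: eq_imset => x; apply/setP => y; by rewrite !inE h.
Qed.

Lemma Phi_inv n (rT1 rT2 : finType) (f : {ffun 'I_n -> rT1}) (g : {ffun 'I_n -> rT2}) :
  Phi f = Phi g -> forall x y, (f x == f y) = (g x == g y).
Proof.
move=> h x y.
have : [set y in [set: 'I_n] | f x == f y] \in Phi g.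
  by rewrite -h /Phi /preim_partition /equivalence_partition imset_f ?inE.
case/imsetP => z _ hz.
have hx : x \in [set y in [set: 'I_n] | f x == f y] by rewrite !inE eqxx.
rewrite hz !inE /= in hx.
have : (y \in [set y in [set: 'I_n] | f x == f y]) =
       (y \in [set y in [set: 'I_n] | g z == g y]) by rewrite hz.
by rewrite !inE /= (eqP hx).
Qed.

Lemma card_Phi n (rT : finType) (f : {ffun 'I_n -> rT}) :
  #|Phi f| = #|f @: [set: 'I_n]|.
Proof.
have -> : Phi f = (fun v => [set y in [set: 'I_n] | v == f y]) @: (f @: [set: 'I_n]).
  by rewrite -imset_comp.
apply: card_in_imset => v w /imsetP[x _ ->] _ hvw.
have : x \in [set y in [set: 'I_n] | f x == f y] by rewrite !inE eqxx.
by rewrite hvw !inE => /eqP.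
Qed.

Lemma ord_eqE k (a b : 'I_k) : (a == b) = (val a == val b).
Proof. by []. Qed.

Lemma epi_fib (m r : nat) (g g' : {ffun 'I_m.+1 -> 'I_r.+2}) : 0 < m ->
  g \in Epi _ _ -> g' \in Epi _ _ ->
  (forall x y, (g x == g y) = (g' x == g' y)) -> g' = g \/ g' = sig g.
Proof.
move=> hm /EpiP[hg sg] /EpiP[hg' sg'] fib.
have hiff : forall i j, i < m.+1 -> j < m.+1 -> (nf g i = nf g j <-> nf g' i = nf g' j).
  move=> i j _ _; have := fib (inord i) (inord j).
  rewrite !ord_eqE -/(nf g i) -/(nf g j) -/(nf g' i) -/(nf g' j).
  by move=> e; split=> /eqP h; apply/eqP; rewrite ?e // -e.
have hN : 1 < m.+1 by [].
case: (step_rel (hom_nf hg) (hom_nf hg') hiff hN) => [hA|hB].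
- left; have [x0 hx0] := sg ord0; have [y0 hy0] := sg' ord0.
  have A1 := hA _ (ltn_ord x0); have A2 := hA _ (ltn_ord y0).
  rewrite !nfE hx0 /= in A1; rewrite !nfE hy0 /= in A2.
  apply/ffunP => x; apply/val_inj; have := hA _ (ltn_ord x); rewrite !nfE /=.
  (simpl in *; lia).
- right; have [x0 hx0] := sg ord0; have [y0 hy0] := sg ord_max.
  have B1 := hB _ (ltn_ord x0); have B2 := hB _ (ltn_ord y0).
  rewrite !nfE hx0 /= in B1; rewrite !nfE hy0 /= in B2.
  have l1 := ltn_ord (g' x0); have l2 := ltn_ord (g' y0).
  apply/ffunP => x; apply/val_inj; have := hB _ (ltn_ord x); rewrite !nfE ffunE /=.
  (simpl in *; lia).
Qed.

Lemma hom_to_epi (m r : nat) (f : {ffun 'I_m.+1 -> 'I_m.+1}) :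
  is_hom f -> #|f @: [set: 'I_m.+1]| = r.+2 ->
  exists g : {ffun 'I_m.+1 -> 'I_r.+2}, g \in Epi _ _ /\ Phi g = Phi f.
Proof.
move=> hf hc; set A := f @: [set: 'I_m.+1].
have [ia _ ha] : exists2 ia : 'I_m.+1, true & forall x, val (f ia) <= val (f x).
  case: (@arg_minnP _ ord0 xpredT (fun i => val (f i))) => // i _ h.
  by exists i => // x; apply: h.
have [ib _ hb] : exists2 ib : 'I_m.+1, true & forall x, val (f x) <= val (f ib).
  case: (@arg_maxnP _ ord0 xpredT (fun i => val (f i))) => // i _ h.
  by exists i => // x; apply: h.
set a := val (f ia) in ha *; set b := val (f ib) in hb *.
have st := hom_nf hf.
have ivt' : forall v, a <= v <= b -> exists x, val (f x) = v.
  move=> v hv; case: (leqP (val ia) (val ib)) => h.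
  - have := @ivt _ _ st (val ib - val ia) (val ia) v.
    rewrite subnKC // => /(_ (ltn_ord ib)).
    rewrite !nfE -/a -/b => /(_ (or_introl hv)) [k [hk e]].
    by exists (inord k); rewrite -e.
  - have := @ivt _ _ st (val ia - val ib) (val ib) v.
    rewrite subnKC ?(ltnW h) // => /(_ (ltn_ord ia)).
    rewrite !nfE -/a -/b => /(_ (or_intror hv)) [k [hk e]].
    by exists (inord k); rewrite -e.
have card_up : r.+2 <= size (iota a (b - a + 1)).
  rewrite -hc cardE -(size_map val); apply: uniq_leq_size.
    by rewrite (map_inj_uniq val_inj) enum_uniq.
  move=> v /mapP[x]; rewrite mem_enum => /imsetP[y _ ->] ->.
  rewrite mem_iota; have := ha y; have := hb y; (simpl in *; lia).
have card_lo : size (iota a (b - a + 1)) <= r.+2.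
  rewrite -hc cardE -(size_map val); apply: uniq_leq_size; first exact: iota_uniq.
  move=> v; rewrite mem_iota => hv.
  have [x hx] : exists x, val (f x) = v by apply: ivt'; have := ha ib; (simpl in *; lia).
  by apply/mapP; exists (f x); rewrite ?mem_enum ?imset_f.
rewrite size_iota in card_up card_lo.
pose g := [ffun x => inord (val (f x) - a) : 'I_r.+2].
have gE : forall x, val (g x) = val (f x) - a.
  move=> x; rewrite ffunE /= inordK //; have := hb x; (simpl in *; lia).
exists g; split.
- apply: EpiI.
    apply: is_homP => i hi; have := st i hi; rewrite /nf !gE.
    have := ha (inord i); have := ha (inord i.+1); (simpl in *; lia).
  move=> v; have [x hx] : exists x, val (f x) = a + v.
    apply: ivt'; have := ltn_ord v; (simpl in *; lia).
  by exists x; apply/val_inj; rewrite gE hx; (simpl in *; lia).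
- apply: Phi_eq => x y; rewrite !ord_eqE !gE.
  have := ha x; have := ha y; move=> h1 h2.
  by apply/eqP/eqP; (simpl in *; lia).
Qed.

Lemma main_gen (m r : nat) : r.+2 <= m.+1 ->
  2 * #|[set rho in CP m.+1 | #|rho| == r.+2]| = #|Epi m.+1 r.+2|.
Proof.
move=> hrm.
have hm : 0 < m by lia.
set E := Epi m.+1 r.+2.
pose Half := [set g in E | enum_rank g < enum_rank (sig g)].
have sigE : forall g, g \in E -> sig g \in E := @sig_epi _ _.
have neq : forall g, g \in E -> enum_rank g != enum_rank (sig g).
  move=> g hg; apply/eqP => /enum_rank_inj h.
  by move: (sig_neq (isT : 1 < r.+2) hg); rewrite -h eqxx.
have notH : forall g, g \in E -> g \notin Half -> sig g \in Half.
  move=> g hg hn; rewrite inE hg /= -leqNgt in hn.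
  by rewrite inE sigE //= sigK ltn_neqAle eq_sym neq.
have compl : E :\: Half = (@sig m r.+2) @: Half.
  apply/setP => g; rewrite inE; apply/andP/imsetP.
  - case=> hn hg; exists (sig g); last by rewrite sigK.
    exact: notH.
  - case=> h; rewrite inE => /andP[hh hlt] ->; split; last exact: sigE.
    by rewrite inE sigE //= sigK -leqNgt ltnW.
have cardE : #|E| = 2 * #|Half|.
  rewrite -(cardsID Half E) compl card_imset; last exact: can_inj (@sigK _ _).
  have -> : E :&: Half = Half.
    by apply/setIidPr; apply/subsetP => g; rewrite inE => /andP[].
  by rewrite mul2n addnn.
have setE : [set rho in CP m.+1 | #|rho| == r.+2] = (fun g => Phi g) @: Half.
  apply/setP => rho; rewrite inE; apply/andP/imsetP.
  - case => /imsetP[f]; rewrite inE => hf -> /eqP hc.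
    change (#|Phi f| = r.+2) in hc; rewrite card_Phi in hc.
    have [g [hg hPhi]] := hom_to_epi hf hc.
    change (exists2 x, x \in Half & Phi f = Phi x).
    case: (boolP (g \in Half)) => hH; first by exists g.
    exists (sig g); first exact: notH.
    rewrite -hPhi; apply: Phi_eq => x y; rewrite !ffunE.
    by rewrite (inj_eq rev_ord_inj).
  - case=> g; rewrite inE => /andP[hg _] ->; split.
    + apply/imsetP; exists [ffun x => widen_ord hrm (g x)].
        rewrite inE; apply: is_homP => i hi.
        have := hom_nf (proj1 (EpiP hg)) hi.
        by rewrite /nf !ffunE.
      change (Phi g = Phi [ffun x => widen_ord hrm (g x)]).
      by apply: Phi_eq => x y; rewrite !ffunE !ord_eqE.
    + rewrite card_Phi; move: hg; rewrite !inE => /andP[_ /eqP ->].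
      by rewrite cardsT card_ord.
rewrite setE card_in_imset ?cardE //.
move=> g g' hg hg' e; have := Phi_inv e.
have hgE : g \in E by move: hg; rewrite inE => /andP[].
have hgE' : g' \in E by move: hg'; rewrite inE => /andP[].
case/(epi_fib hm hgE hgE') => // h.
move: hg hg'; rewrite !inE h sigK => /andP[_ h1] /andP[_ h2].
by have := ltn_trans h1 h2; rewrite ltnn.
Qed.

Theorem mainTheorem8 (n k : nat) (hk1 : 1 <= k) (hkn : k <= n - 1) :
  2 * l k n = #|Epi n (n - k + 1)|.
Proof.
case: n hkn => [|m] hkn; first lia.
have e : m.+1 - k + 1 = (m - k).+2 by lia.
rewrite /l e; apply: main_gen; lia.
Qed.
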